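(* Let $p$ and $v$ be two distinct points in the plane and let $R$ be a ray emanating from $v$ that does not pass through $p$. Let $c_1,c_2$ be constants with $c_2>c_1>0$. Then the largest value of $|pq|/\max\{|vq|,c_2\}$ over all points $q$ on $R$ with $|pq|>|vq|\geqslant c_1$ is achieved when $|vq|=c_1$ or $|vq|=c_2$.
   Context: $|xy|$ denotes the Euclidean distance between points $x$ and $y$. *)

(* Defs.v *)
From Stdlib Require Import Reals.
Open Scope R_scope.

Definition point : Type := (R * R)%type.

Definition edist (x y : point) : R :=
  sqrt ((fst x - fst y) ^ 2 + (snd x - snd y) ^ 2).

Definition on_ray (v w q : point) : Prop :=
  exists t : R, 0 <= t /\
    q = (fst v + t * (fst w - fst v), snd v + t * (snd w - snd v)).

Definition ratio (p v : point) (c2 : R) (q : point) : R :=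
  edist p q / Rmax (edist v q) c2.

(* Main.v *)
Require Import Defs.
From Stdlib Require Import Reals Lra Psatz.
Open Scope R_scope.

Lemma cmp_sqrt (A B M N : R) : 0 <= A -> 0 <= B -> 0 < M -> 0 < N ->
  A * N ^ 2 <= B * M ^ 2 -> sqrt A / M <= sqrt B / N.
Proof.
  intros hA hB hM hN h.
  assert (sqrt A * N <= sqrt B * M).
  { rewrite <- (sqrt_pow2 N), <- (sqrt_pow2 M) by lra.
    rewrite <- !sqrt_mult by (try apply pow2_ge_0; lra).
    apply sqrt_le_1_alt; lra. }
  apply (Rmult_le_reg_r (M * N)). nra.
  replace (sqrt A / M * (M * N)) with (sqrt A * N) by (field; lra).
  replace (sqrt B / N * (M * N)) with (sqrt B * M) by (field; lra).
  lra.
Qed.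

Lemma real_core (a D s c1 c2 : R) :
  let g := fun x => x ^ 2 - 2 * a * x + D in
  0 <= D -> 0 < c1 -> c1 < c2 -> c1 <= s -> 0 <= g s -> 0 <= g c1 -> 0 <= g c2 ->
  sqrt (g s) > s ->
  sqrt (g s) / Rmax s c2 <= sqrt (g c1) / Rmax c1 c2 \/
  sqrt (g s) / Rmax s c2 <= sqrt (g c2) / Rmax c2 c2.
Proof.
  intros g hD h1 h12 hs g0 g1 g2 hgt.
  assert (hg : g s > s ^ 2).
  { destruct (Rle_or_lt (g s) (s ^ 2)) as [H|H]; [|lra].
    apply sqrt_le_1_alt in H. rewrite sqrt_pow2 in H by lra. lra. }
  subst g; cbv beta in *.
  rewrite (Rmax_right c1 c2) by lra. rewrite (Rmax_right c2 c2) by lra.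
  destruct (Rle_or_lt s c2) as [Hs|Hs].
  - rewrite Rmax_right by lra.
    assert (Hc : (s - c1) * (s - c2) <= 0) by nra.
    assert (Hi : (s ^ 2 - 2 * a * s + D) * (c2 - c1) =
      (c1 ^ 2 - 2 * a * c1 + D) * (c2 - s) + (c2 ^ 2 - 2 * a * c2 + D) * (s - c1)
      + (s - c1) * (s - c2) * (c2 - c1)) by ring.
    destruct (Rle_or_lt (c1 ^ 2 - 2 * a * c1 + D) (c2 ^ 2 - 2 * a * c2 + D)).
    + right. apply cmp_sqrt; try lra. apply Rmult_le_compat_r; [nra|].
      apply (Rmult_le_reg_r (c2 - c1)); [lra|]. nra.
    + left. apply cmp_sqrt; try lra. apply Rmult_le_compat_r; [nra|].
      apply (Rmult_le_reg_r (c2 - c1)); [lra|]. nra.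
  - rewrite Rmax_left by lra. right. apply cmp_sqrt; try lra.
    assert (D > 2 * a * s) by lra.
    assert ((s ^ 2 - 2 * a * s + D) * c2 ^ 2 - (c2 ^ 2 - 2 * a * c2 + D) * s ^ 2
       = (s - c2) * (2 * a * c2 * s - D * (s + c2))) by ring.
    assert ((D - 2 * a * s) * c2 > 0) by (apply Rmult_gt_0_compat; lra).
    assert (D * s >= 0) by nra.
    assert (2 * a * c2 * s - D * (s + c2) <= 0) by nra.
    nra.
Qed.

Theorem lemma4 (p v w : point) (c1 c2 : R) :
  p <> v -> w <> v -> ~ on_ray v w p ->
  0 < c1 -> c1 < c2 ->
  forall q : point, on_ray v w q ->
    edist p q > edist v q -> edist v q >= c1 ->
    exists q' : point, on_ray v w q' /\
      (edist v q' = c1 \/ edist v q' = c2) /\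
      ratio p v c2 q <= ratio p v c2 q'.
Proof.
  intros _ hwv _ h1 h12 q [t [ht ->]] hgt hge.
  destruct p as [px py], v as [vx vy], w as [wx wy]; simpl in *.
  set (dx := wx - vx) in *. set (dy := wy - vy) in *.
  set (X := px - vx). set (Y := py - vy).
  assert (hpos : dx ^ 2 + dy ^ 2 > 0).
  { destruct (Req_dec dx 0) as [Ex|Ex]; [destruct (Req_dec dy 0) as [Ey|Ey]|].
    - exfalso; apply hwv. unfold dx, dy in *. f_equal; lra.
    - assert (dy ^ 2 > 0) by (nra). nra.
    - assert (dx ^ 2 > 0) by (nra). nra. }
  set (L := sqrt (dx ^ 2 + dy ^ 2)).
  assert (hL : 0 < L) by (apply sqrt_lt_R0; lra).
  assert (hL2 : L * L = dx ^ 2 + dy ^ 2) by (apply sqrt_sqrt; lra).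
  set (a := (X * dx + Y * dy) / L). set (D := X ^ 2 + Y ^ 2).
  set (g := fun x => x ^ 2 - 2 * a * x + D).
  assert (Gt : forall t, g (t * L) = (px - (vx + t * dx)) ^ 2 + (py - (vy + t * dy)) ^ 2).
  { intro u. unfold g.
    replace (2 * a * (u * L)) with (2 * u * (X * dx + Y * dy)) by (unfold a; field; lra).
    replace ((u * L) ^ 2) with (u ^ 2 * (L * L)) by ring. rewrite hL2.
    unfold D, X, Y. ring. }
  assert (gnn : forall x, 0 <= g x).
  { intro x. replace x with ((x / L) * L) by (field; lra). rewrite Gt. apply Rplus_le_le_0_compat; apply pow2_ge_0. }
  assert (E1 : forall u, 0 <= u -> edist (vx, vy) (vx + u * dx, vy + u * dy) = u * L).
  { intros u hu. unfold edist; cbn [fst snd].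
    replace ((vx - (vx + u * dx)) ^ 2 + (vy - (vy + u * dy)) ^ 2) with ((u * L) ^ 2)
      by (replace ((u * L) ^ 2) with (u ^ 2 * (L * L)) by ring; rewrite hL2; ring).
    apply sqrt_pow2. nra. }
  assert (E2 : forall u, edist (px, py) (vx + u * dx, vy + u * dy) = sqrt (g (u * L))).
  { intro u. unfold edist; cbn [fst snd]. rewrite Gt. reflexivity. }
  rewrite E1 in hgt, hge by lra. rewrite E2 in hgt.
  assert (hD : 0 <= D) by (unfold D; nra).
  destruct (real_core a D (t * L) c1 c2 hD h1 h12 ltac:(lra) (gnn _) (gnn _) (gnn _) hgt)
    as [H|H].
  - exists (vx + (c1 / L) * dx, vy + (c1 / L) * dy). split.
    + exists (c1 / L). split; [apply Rlt_le, Rdiv_lt_0_compat; lra | reflexivity].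
    + assert (Ec : edist (vx, vy) (vx + c1 / L * dx, vy + c1 / L * dy) = c1).
      { rewrite E1. field; lra. apply Rlt_le, Rdiv_lt_0_compat; lra. }
      split; [left; exact Ec|]. unfold ratio. rewrite Ec, E1, E2, E2 by lra.
      replace (c1 / L * L) with c1 by (field; lra). exact H.
  - exists (vx + (c2 / L) * dx, vy + (c2 / L) * dy). split.
    + exists (c2 / L). split; [apply Rlt_le, Rdiv_lt_0_compat; lra | reflexivity].
    + assert (Ec : edist (vx, vy) (vx + c2 / L * dx, vy + c2 / L * dy) = c2).
      { rewrite E1. field; lra. apply Rlt_le, Rdiv_lt_0_compat; lra. }
      split; [right; exact Ec|]. unfold ratio. rewrite Ec, E1, E2, E2 by lra.
      replace (c2 / L * L) with c2 by (field; lra). exact H.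
Qed.
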